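(* Let $n\geqslant 1$ and let $m_1,\ldots,m_n$ be nonnegative integers. Then, as rational functions of $x$, $$\|x_j^{m_i}\|^*_{1\leqslant i,j\leqslant n}(x-n+1,x-n+2,\ldots,x)=\prod_{1\leqslant i<j\leqslant n}(m_j-m_i)\times\prod_{i=1}^n\frac{(x)_{m_i}}{(x)_{i-1}},$$ where the left side means the polynomial $Q^*$ for $Q(x_1,\ldots,x_n)=\|x_j^{m_i}\|_{1\leqslant i,j\leqslant n}$ evaluated at $x_i=x-n+i$ for $i=1,\ldots,n$.
   Context: $(x)_0=1$ and $(x)_r=x(x-1)\cdots(x-r+1)$ for positive integers $r$. For a polynomial $Q=\sum_{j_1,\ldots,j_n} c_{j_1,\ldots,j_n}x_1^{j_1}\cdots x_n^{j_n}\in\mathbb{C}[x_1,\ldots,x_n]$, $Q^*$ denotes $\sum_{j_1,\ldots,j_n} c_{j_1,\ldots,j_n}(x_1)_{j_1}\cdots(x_n)_{j_n}$. $\|b_{ij}\|_{1\leqslant i,j\leqslant n}$ denotes the determinant of the matrix $(b_{ij})$. *)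

(* Defs.v *)
From HB Require Import structures.
From mathcomp Require Import all_boot all_order all_algebra all_field.
From mathcomp Require Import mpoly.
Set Implicit Arguments. Unset Strict Implicit. Unset Printing Implicit Defensive.
Import Order.TTheory GRing.Theory Num.Theory.
Local Open Scope ring_scope.

Definition ffact (R : pzRingType) (p : R) (k : nat) : R :=
  \prod_(r < k) (p - r%:R).

Definition star (R : comNzRingType) (n : nat) (Q : {mpoly R[n]}) : {mpoly R[n]} :=
  \sum_(m <- msupp Q) Q@_m *: \prod_(i < n) ffact ('X_i) (m i).

Definition powmx (n : nat) (m : 'I_n -> nat) : 'M[{mpoly algC[n]}]_n :=
  \matrix_(i < n, j < n) ('X_j ^+ m i).

Definition evalpoly (n : nat) (P : {mpoly algC[n]}) (v : 'I_n -> {poly algC}) : {poly algC} :=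
  mmap (@polyC algC) v P.

Notation "x %:F" := (@FracField.tofrac _ x) : ring_scope.

(* Main.v *)
Require Import Defs.
From HB Require Import structures.
From mathcomp Require Import all_boot all_order all_algebra all_field.
From mathcomp Require Import mpoly.
From mathcomp Require Import ssrcomplements.
From mathcomp Require Import zify ring.
From mathcomp Require Import fingroup perm.
Import Order.TTheory GRing.Theory Num.Theory.
Local Open Scope ring_scope.
Set Implicit Arguments. Unset Strict Implicit.

Section Lin.
Variables (R : comNzRingType) (n : nat) (V : lmodType R) (G : 'X_{1..n} -> V).
Definition Lm (p : {mpoly R[n]}) : V := \sum_(m <- msupp p) p@_m *: G m.

Lemma LmE p i : (msize p <= i)%N ->
  Lm p = \sum_(m : 'X_{1..n < i}) p@_m *: G m.
Proof.
move=> le_pi; set I : subFinType _ := 'X_{1..n < i}.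
rewrite /Lm (big_mksub I) ?msupp_uniq //=; first last.
  by move=> x /msize_mdeg_lt /leq_trans; apply.
rewrite big_rmcond //= => j /memN_msupp_eq0 ->.
by rewrite scale0r.
Qed.

Lemma Lm_lin a p q : Lm (a *: p + q) = a *: Lm p + Lm q.
Proof.
pose i := (msize p + msize q + msize (a *: p + q))%N.
rewrite !(@LmE _ i) /i; try lia.
rewrite scaler_sumr -big_split; apply: eq_bigr => j _.
by rewrite mcoeffD mcoeffZ scalerDl scalerA.
Qed.

Lemma LmX m : Lm 'X_[m] = G m.
Proof. by rewrite /Lm msuppX big_seq1 mcoeffX eqxx scale1r. Qed.
End Lin.

Section Star.
Variables (R : comNzRingType) (n : nat).
Let G (a : 'X_{1..n}) : {mpoly R[n]} := \prod_(i < n) ffact ('X_i) (a i).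

Lemma starLm (Q : {mpoly R[n]}) : star Q = Lm G Q.
Proof. by []. Qed.

Lemma Lm0 : Lm G 0 = 0.
Proof. by rewrite /Lm msupp0 big_nil. Qed.

Lemma LmD p q : Lm G (p + q) = Lm G p + Lm G q.
Proof. by have := Lm_lin G 1 p q; rewrite !scale1r. Qed.

Lemma LmN p : Lm G (- p) = - Lm G p.
Proof. by have := Lm_lin G (-1) p 0; rewrite Lm0 !addr0 !scaleN1r. Qed.

Lemma star_det (m : 'I_n -> nat) :
  star (\det (\matrix_(i < n, j < n) ('X_j ^+ m i) : 'M[{mpoly R[n]}]_n))
  = \det (\matrix_(i < n, j < n) ffact ('X_j : {mpoly R[n]}) (m i)).
Proof.
rewrite starLm /determinant (big_morph (Lm G) LmD Lm0); apply: eq_bigr => s _.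
have -> : \prod_i (\matrix_(i < n, j < n) ('X_j ^+ m i) : 'M[{mpoly R[n]}]_n) i ((s : {perm 'I_n}) i)
   = 'X_[[multinom m (((s : {perm 'I_n})^-1)%g j) | j < n]].
  rewrite (@mpolyXE n R s); apply: eq_bigr => i _; rewrite !mxE mnmE permK //.
have -> : \prod_i (\matrix_(i < n, j < n) ffact ('X_j : {mpoly R[n]}) (m i)) i ((s : {perm 'I_n}) i)
   = G [multinom m (((s : {perm 'I_n})^-1)%g j) | j < n].
  rewrite /G [RHS](reindex_inj (@perm_inj _ s)); apply: eq_bigr => i _.
  by rewrite !mxE mnmE permK.
case: (odd_perm s); rewrite ?expr1 ?expr0 ?mulN1r ?mul1r ?LmN LmX //.
Qed.
End Star.

Lemma ffactD (R : comNzRingType) (p : R) a b :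
  ffact p (a + b) = ffact p a * ffact (p - a%:R) b.
Proof.
rewrite /ffact big_split_ord /=; congr (_ * _); apply: eq_bigr => i _.
by rewrite natrD opprD addrA.
Qed.

Lemma ffact_poly (K : fieldType) k :
  ffact ('X : {poly K}) k = \prod_(r <- index_iota 0 k) ('X - (r%:R)%:P).
Proof.
rewrite /ffact -(big_mkord xpredT (fun r => 'X - r%:R)).
by apply: eq_bigr => r _; rewrite polyC_natr.
Qed.

Lemma size_ffact_poly (K : fieldType) k : size (ffact ('X : {poly K}) k) = k.+1.
Proof. by rewrite ffact_poly size_prod_XsubC size_iota subn0. Qed.

Lemma lead_ffact_poly (K : fieldType) k : lead_coef (ffact ('X : {poly K}) k) = 1.
Proof. by rewrite ffact_poly lead_coef_prod_XsubC. Qed.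

Lemma horner_ffact (K : fieldType) k (a : K) : (ffact ('X : {poly K}) k).[a] = ffact a k.
Proof.
rewrite /ffact horner_prod; apply: eq_bigr => r _.
by rewrite -polyC_natr hornerXsubC.
Qed.

Lemma vander_ffact (K : fieldType) n (a : 'I_n -> K) :
  \det (\matrix_(i < n, j < n) ffact (a i) j)
  = \prod_(i < n) \prod_(j < n | (i < j)%N) (a j - a i).
Proof.
pose W : 'M[K]_n := \matrix_(i < n, l < n) a i ^+ l.
pose C : 'M[K]_n := \matrix_(l < n, j < n) (ffact ('X : {poly K}) j)`_l.
have -> : \matrix_(i < n, j < n) ffact (a i) j = W *m C.
  apply/matrixP => i j; rewrite !mxE -horner_ffact (@horner_coef_wide _ n).
    by apply: eq_bigr => l _; rewrite !mxE mulrC.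
  by rewrite size_ffact_poly.
rewrite det_mulmx.
have -> : \det C = 1.
  rewrite -det_tr det_trig.
    rewrite big1 // => i _; rewrite !mxE.
    by have := lead_ffact_poly K i; rewrite lead_coefE size_ffact_poly.
  apply/is_trig_mxP => i j lt_ij; rewrite !mxE nth_default //.
  by rewrite size_ffact_poly.
rewrite mulr1.
have -> : W = (Vandermonde n (\row_i a i))^T.
  by apply/matrixP => i j; rewrite !mxE.
rewrite det_tr det_Vandermonde; apply: eq_bigr => i _; apply: eq_bigr => j _.
by rewrite !mxE.
Qed.

Lemma det_conj (R : comNzRingType) n (s : {perm 'I_n}) (A : 'M[R]_n) :
  \det (\matrix_(i < n, j < n) A (s i) (s j)) = \det A.
Proof.
have -> : \matrix_(i < n, j < n) A (s i) (s j) = row_perm s (col_perm s A).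
  by apply/matrixP => i j; rewrite !mxE.
rewrite row_permE col_permE !det_mulmx !det_perm odd_permV.
by rewrite mulrA mulrC mulrA -expr2 sqrr_sign mul1r.
Qed.

Lemma prod_rev (R : comNzRingType) n (f : 'I_n -> 'I_n -> R) :
  \prod_(i < n) \prod_(j < n | (i < j)%N) f (rev_ord i) (rev_ord j)
  = \prod_(i < n) \prod_(j < n | (i < j)%N) f j i.
Proof.
rewrite !pair_big_dep /=.
pose h (p : 'I_n * 'I_n) := (rev_ord p.2, rev_ord p.1).
have hinj : injective h.
  move=> [a b] [c d] [e1 e2]; have := ltn_ord a; have := ltn_ord b; have := ltn_ord c; have := ltn_ord d.
  move=> hd hc hb ha; congr pair; apply: val_inj => /=; lia.
rewrite [RHS](reindex_inj hinj) /=; apply: eq_big => -[a b] //=.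
have := ltn_ord a; have := ltn_ord b; lia.
Qed.

Lemma main_field (K : fieldType) (x : K) (hx : forall r : nat, x - r%:R != 0)
  n (m : 'I_n -> nat) :
  \det (\matrix_(i < n, j < n) ffact (x - (n - j.+1)%:R) (m i))
  = (\prod_(i < n) \prod_(j < n | (i < j)%N) ((m j)%:R - (m i)%:R))
    * \prod_(i < n) (ffact x (m i) / ffact x i).
Proof.
have ffne k : ffact x k != 0 by apply/prodf_neq0 => r _; apply: hx.
pose N : 'M[K]_n := \matrix_(i < n, j < n) ffact (x - (m i)%:R) (n - j.+1).
have -> : \matrix_(i < n, j < n) ffact (x - (n - j.+1)%:R) (m i)
   = diag_mx (\row_i ffact x (m i)) *m N *m diag_mx (\row_j (ffact x (n - j.+1))^-1).
  apply/matrixP => i j; rewrite mul_mx_diag mul_diag_mx !mxE.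
  have e1 := ffactD x (n - j.+1)%N (m i).
  have e2 := ffactD x (m i) (n - j.+1)%N.
  rewrite addnC e2 in e1.
  have ne := ffne (n - j.+1)%N.
  apply: (mulfI ne); rewrite -e1; field; exact: ne.
rewrite !det_mulmx !det_diag.
have -> : \det N = \prod_(i < n) \prod_(j < n | (i < j)%N) ((m j)%:R - (m i)%:R :> K).
  rewrite -(det_conj (perm (@rev_ord_inj n))).
  have -> : \matrix_(i < n, j < n) N (perm (@rev_ord_inj n) i) (perm (@rev_ord_inj n) j)
     = \matrix_(i < n, j < n) ffact (x - (m (rev_ord i))%:R) j.
    apply/matrixP => i j; rewrite !mxE !permE /=; congr ffact.
    have := ltn_ord j; lia.
  rewrite vander_ffact -(prod_rev (fun p q => (m p)%:R - (m q)%:R :> K)).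
  apply: eq_bigr => i _; apply: eq_bigr => j _; ring.
rewrite big_split /=.
have -> : \prod_(i < n) (ffact x i)^-1 = \prod_(i < n) (\row_j (ffact x (n - j.+1))^-1) 0 i.
  rewrite (reindex_inj (@rev_ord_inj n)); apply: eq_bigr => i _; rewrite !mxE //.
under eq_bigr do rewrite mxE.
ring.
Qed.

Lemma ffact_rmorph (R S : comNzRingType) (f : {rmorphism R -> S}) (p : R) k :
  f (ffact p k) = ffact (f p) k.
Proof. by rewrite /ffact rmorph_prod; apply: eq_bigr => r _; rewrite rmorphB rmorph_nat. Qed.

Lemma eval_ffactX n (v : 'I_n -> {poly algC}) j k :
  evalpoly (ffact ('X_j : {mpoly algC[n]}) k) v = ffact (v j) k.
Proof.
rewrite /evalpoly ffact_rmorph; congr ffact.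
have := @mmapX n algC {poly algC} v (@polyC algC) U_(j); rewrite mmap1U => <-.
by [].
Qed.

Unset Implicit Arguments.

Theorem corollary2p1 (n : nat) (hn : (1 <= n)%N) (m : 'I_n -> nat) :
  (evalpoly (star (\det (powmx m))) (fun i : 'I_n => 'X + (i.+1)%:R - n%:R))%:F
  = ((\prod_(i < n) \prod_(j < n | (i < j)%N) ((m j)%:R - (m i)%:R)) : {poly algC})%:F
    * \prod_(i < n) ((ffact ('X : {poly algC}) (m i))%:F / (ffact ('X : {poly algC}) i)%:F).
Proof.
set v := (fun i : 'I_n => _).
set x : {fraction {poly algC}} := ('X)%:F.
have hx : forall r : nat, x - r%:R != 0.
  move=> r; rewrite /x -(rmorph_nat (@FracField.tofrac _)) -rmorphB tofrac_eq0.
  by rewrite -polyC_natr -size_poly_eq0 size_XsubC.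
rewrite /powmx star_det /evalpoly -det_map_mx -det_map_mx.
have -> : map_mx (@FracField.tofrac _) (map_mx (mmap (@polyC algC) v)
      (\matrix_(i < n, j < n) ffact ('X_j : {mpoly algC[n]}) (m i)))
    = \matrix_(i < n, j < n) ffact (x - (n - j.+1)%:R) (m i).
  apply/matrixP => i j; rewrite !mxE.
  have := eval_ffactX v j (m i); rewrite /evalpoly => ->.
  rewrite ffact_rmorph /v rmorphB rmorphD rmorph_nat rmorph_nat natrB //.
  rewrite /x; congr ffact; ring.
rewrite main_field //; congr (_ * _).
  rewrite rmorph_prod; apply: eq_bigr => i _; rewrite rmorph_prod; apply: eq_bigr => j _.
  by rewrite rmorphB !rmorph_nat.
by apply: eq_bigr => i _; rewrite !ffact_rmorph.
Qed.
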